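(* For every integer $r\ge 3$, $m(r)\ge (r-1)^{r-1}$.
   Context: A bi-hypergraph $\mathcal H=(V,E)$ consists of a finite vertex set $V$ and a set $E$ of subsets of $V$, called edges, with no edge contained in another. It is $r$-uniform if every edge has exactly $r$ elements. A mapping $f:V\to\mathbb N$ is a proper coloring of $\mathcal H$ if $1<|f(e)|<|e|$ for every $e\in E$, where $f(e)=\{f(v):v\in e\}$. $\mathcal H$ is colorable if it has a proper coloring, and uncolorable otherwise. A subhypergraph of $\mathcal H$ is a bi-hypergraph $(V',E')$ with $V'\subseteq V$, $E'\subseteq E$. $\mathcal H$ is minimal uncolorable if it is uncolorable but every proper subhypergraph of it is colorable. $m(r)$ denotes the smallest positive integer $m$ for which there exists a minimal uncolorable $r$-uniform bi-hypergraph with exactly $m$ edges. *)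

(* Defs.v *)
From mathcomp Require Import all_boot.
Set Implicit Arguments. Unset Strict Implicit. Unset Printing Implicit Defensive.

Definition bihypergraph (T : finType) (V : {set T}) (E : {set {set T}}) : Prop :=
  (forall e, e \in E -> e \subset V) /\
  (forall e e', e \in E -> e' \in E -> e \subset e' -> e = e').

Definition r_uniform (T : finType) (r : nat) (E : {set {set T}}) : Prop :=
  forall e, e \in E -> #|e| = r.

Definition ncolors (T : finType) (f : T -> nat) (e : {set T}) : nat :=
  size (undup [seq f x | x <- enum e]).

Definition proper_coloring (T : finType) (E : {set {set T}}) (f : T -> nat) : Prop :=
  forall e, e \in E -> 1 < ncolors f e < #|e|.

Definition colorable (T : finType) (V : {set T}) (E : {set {set T}}) : Prop :=
  exists f : T -> nat, proper_coloring E f.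

Definition subhypergraph (T : finType) (V' : {set T}) (E' : {set {set T}})
    (V : {set T}) (E : {set {set T}}) : Prop :=
  bihypergraph V' E' /\ V' \subset V /\ E' \subset E.

Definition minimal_uncolorable (T : finType) (V : {set T}) (E : {set {set T}}) : Prop :=
  bihypergraph V E /\ ~ colorable V E /\
  (forall V' E', subhypergraph V' E' V E -> (V', E') <> (V, E) -> colorable V' E').

(* Main.v *)
Require Import Defs.
From mathcomp Require Import all_boot.

Lemma card_bigcup_le {I U : finType} (P : pred I) (F : I -> {set U}) :
  #|\bigcup_(i | P i) F i| <= \sum_(i | P i) #|F i|.
Proof.
elim/big_rec2: _ => [|i n S _ leSn]; first by rewrite cards0.
by rewrite (leq_trans (leq_card_setU (F i) S).1) ?leq_add2l.
Qed.

Section Count.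
Variables (T : finType) (k : nat).

Definition fam (e : {set T}) (c : 'I_k) : {set {ffun T -> 'I_k}} :=
  [set g in family (fun x => if x \in e then pred1 c else predT)].

Lemma card_fam e c : #|fam e c| = k ^ (#|T| - #|e|).
Proof.
rewrite cardsE card_family foldrE big_map big_enum /=.
rewrite (eq_bigr (fun x => if x \in e then 1 else k)); last first.
  by move=> x _; case: (x \in e); rewrite ?card1 // cardT size_enum_ord.
rewrite (bigID (mem e)) /= big1 ?mul1n; last by move=> i ->.
rewrite (eq_bigr (fun _ => k)); last by move=> i /negbTE ->.
rewrite -(card_ord k) (eq_bigl (mem (~: e))); last by move=> i; rewrite !inE.
rewrite prod_nat_const card_ord; congr (_ ^ _).
by rewrite -(cardsC e) addKn.
Qed.
End Count.
Arguments fam {T k}.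
Arguments card_fam {T k}.

Lemma size_le1_eq (s : seq nat) x y :
  size s <= 1 -> x \in s -> y \in s -> x = y.
Proof.
case: s => [|a [|b s]] //= _; rewrite !inE => /eqP -> /eqP -> //.
Qed.

Theorem mainTheorem2 (r : nat) (hr : 3 <= r) (T : finType)
    (V : {set T}) (E : {set {set T}}) :
  minimal_uncolorable V E -> r_uniform r E -> (r - 1) ^ (r - 1) <= #|E|.
Proof.
move=> [_ [ncol _]] unif.
case: r hr unif => // k hr unif; rewrite subn1 /=.
have k2 : 1 < k by [].
case: (leqP (k ^ k) #|E|) => // small.
exfalso; apply: ncol.
pose B := \bigcup_(p in setX E [set: 'I_k]) fam p.1 p.2.
have cardB : #|B| < #|{ffun T -> 'I_k}|.
  have := card_bigcup_le (fun p => p \in setX E [set: 'I_k]) (fun p => fam p.1 p.2).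
  move=> H; rewrite /B;  apply: leq_ltn_trans H _.
  rewrite (eq_bigr (fun _ => k ^ (#|T| - k.+1))); last first.
    by move=> [e c]; rewrite !inE andbT => eE; rewrite card_fam unif.
  rewrite sum_nat_const cardsX cardsT card_ord card_ffun card_ord.
  have [E0|[e0 e0E]] := set_0Vmem E.
    by rewrite E0 cards0 !mul0n expn_gt0 ltnW.
  have nT : k.+1 <= #|T| by rewrite -(unif e0 e0E) max_card.
  have -> : k ^ #|T| = k ^ k * (k * k ^ (#|T| - k.+1)).
    by rewrite -expnS -expnD; congr (_ ^ _); rewrite subnSK // subnKC // ltnW.
  by rewrite -mulnA ltn_pmul2r // muln_gt0 !expn_gt0 ltnW.
have /subsetPn[g _ gB] : ~~ ([set: {ffun T -> 'I_k}] \subset B).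
  by apply: contraL cardB => /subset_leq_card; rewrite cardsT -leqNgt.
exists (fun x => nat_of_ord (g x)) => e eE.
have ce := unif e eE.
apply/andP; split; last first.
  rewrite ce ltnS /ncolors.
  apply: (@leq_trans (size (iota 0 k))); last by rewrite size_iota.
  apply: uniq_leq_size; first exact: undup_uniq.
  move=> x; rewrite mem_undup => /mapP[y _ ->]; by rewrite mem_iota /=.
rewrite ltnNge; apply/negP => small1.
have [x0 x0e] : exists x0, x0 \in e.
  by apply/set0Pn; rewrite -card_gt0 ce.
apply: (negP gB); apply/bigcupP; exists (e, g x0); first by rewrite !inE eE.
rewrite inE; apply/familyP => x /=; case: ifP => // xe; rewrite inE.
apply/eqP/val_inj => /=; rewrite /ncolors in small1.
have := @size_le1_eq _ (nat_of_ord (g x)) (nat_of_ord (g x0)) small1; apply; rewrite mem_undup;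
  apply/mapP; [exists x | exists x0] => //; by rewrite mem_enum.
Qed.
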